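(* Let $\mathcal T=(T,\lambda)$ be a temporal oriented tree with connectivity graph $G$, and let $H$ be an induced cycle of $G$ of length at least $4$. Then for every vertex $v\in V(H)$ and every arc $a$ of $T$ incident with $v$, all vertices of $V(H)\setminus\{v\}$ lie in the same connected component of $T\setminus\{a\}$ (the forest obtained from $T$ by deleting the arc $a$).
   Context: A temporal digraph is a pair $(D,\lambda)$ with $D=(V,A)$ a finite digraph and $\lambda:A\to 2^{\{1,\dots,t_{\max}\}}$ giving the time-steps at which each arc is active. A temporal oriented tree $\mathcal T=(T,\lambda)$ is one whose underlying digraph $T$ is an orientation of a tree. A temporal path is a sequence $(v_1,v_2,t_1),\dots,(v_{k-1},v_k,t_{k-1})$ with pairwise distinct $v_i$, $\overrightarrow{v_iv_{i+1}}\in A$, $t_i\in\lambda(\overrightarrow{v_iv_{i+1}})$ and $t_1<\dots<t_{k-1}$. Two vertices $u\ne v$ are temporally connected if there is a temporal path from $u$ to $v$ or from $v$ to $u$. The connectivity graph of $\mathcal T$ is the undirected graph $G$ with $V(G)=V(T)$ and $uv\in E(G)$ iff $u\neq v$ and $u,v$ are temporally connected. *)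

(* Defs.v *)
From mathcomp Require Import all_boot.
Set Implicit Arguments. Unset Strict Implicit. Unset Printing Implicit Defensive.

(* A digraph on a finite vertex type V is given by its arc relation A : rel V.
   The labelling lam assigns to each ordered pair (x,y) a list of time-steps;
   only its values on arcs (A x y) matter. *)

Section Temporal.
Variable V : finType.
Variable A : rel V.
Variable lam : V -> V -> seq nat.

Definition und : rel V := fun x y => A x y || A y x.

Definition oriented_tree : Prop :=
  [/\ irreflexive A,
      (forall x y, A x y -> ~~ A y x),
      (forall x y, connect und x y) &
      (forall s : seq V, uniq s -> 3 <= size s -> ~~ cycle und s)].

Definition labels_in (tmax : nat) : Prop :=
  forall x y t, A x y -> t \in lam x y -> 1 <= t <= tmax.

Fixpoint arc_walk (u : V) (p : seq (V * nat)) : bool :=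
  match p with
  | [::] => true
  | (w, t) :: p' => [&& A u w, t \in lam u w & arc_walk w p']
  end.

Definition temporal_path (u v : V) (p : seq (V * nat)) : bool :=
  [&& arc_walk u p, uniq (u :: map fst p), sorted ltn (map snd p)
    & last u (map fst p) == v].

Definition temporally_connected (u v : V) : Prop :=
  u != v /\
  ((exists p, temporal_path u v p) \/ (exists p, temporal_path v u p)).

Definition conn_edge (u v : V) : Prop := temporally_connected u v.

(* H = c_0 c_1 ... c_{k-1} c_0 is an induced cycle of G of length k = size c *)
Definition induced_cycle (c : seq V) : Prop :=
  let k := size c in
  [/\ 3 <= k, uniq c &
      forall (x0 : V) i j, i < k -> j < k ->
        (conn_edge (nth x0 c i) (nth x0 c j) <->
         (j == (i.+1) %% k) || (i == (j.+1) %% k))].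

(* the forest T \ {a}, for the arc a = (x,y): undirected edges of T except xy *)
Definition und_minus (x y : V) : rel V :=
  fun p q => und p q && ~~ (((p == x) && (q == y)) || ((p == y) && (q == x))).

End Temporal.

(* Main.v *)
Require Import Defs.
From mathcomp Require Import all_boot zify.
Set Implicit Arguments. Unset Strict Implicit.
Lemma arc_walk_cat (V : finType) (A : rel V) lam u p1 p2 :
  arc_walk A lam u (p1 ++ p2) = arc_walk A lam u p1 && arc_walk A lam (last u (map fst p1)) p2.
Proof. elim: p1 u => [|[w t] p1 IH] u //=. by rewrite IH !andbA. Qed.
Lemma seq_aux (T:eqType) (u v:T) a b : (u \notin a ++ v :: b) && uniq (a ++ v :: b) ->
  (u \notin a ++ [::v]) && uniq (a ++ [::v]) /\ (v \notin b) && uniq b.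
Proof.
have -> : a ++ v :: b = (a ++ [:: v]) ++ b by rewrite -catA.
rewrite !mem_cat negb_or cat_uniq => /andP[/andP[-> _] /and3P[-> H ->]]; split => //.
rewrite andbT; apply/negP => vb; move/hasP: H; apply; exists v => //; by rewrite mem_cat mem_seq1 eqxx orbT.
Qed.
Lemma sort_aux (a b : seq nat) t : sorted ltn (a ++ t :: b) -> sorted ltn (a ++ [::t]) /\ sorted ltn b.
Proof. rewrite sorted_cat_cons cats1 => /andP[-> /path_sorted ->]; done. Qed.

Lemma tp_split (V : finType) (A : rel V) lam u w p1 v t p2 :
  temporal_path A lam u w (p1 ++ (v,t)::p2) ->
  temporal_path A lam u v (p1 ++ [:: (v,t)]) /\ temporal_path A lam v w p2.
Proof.
rewrite /temporal_path (arc_walk_cat A lam u p1) (arc_walk_cat A lam u p1) /= !map_cat /= !last_cat /=.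
move=> /and4P [/andP[Hp1 /and3P[Ha Ht Hp2]] Hu Hs Hl].
rewrite Hp1 Ha Ht Hp2 Hl eqxx /= !andbT.
case: (seq_aux Hu) => -> ->; case: (sort_aux Hs) => -> ->; done.
Qed.

Lemma walk_avoid (V : finType) (A : rel V) lam x y v u p :
  (v == x) || (v == y) -> arc_walk A lam u p -> v \notin u :: map fst p ->
  connect (und_minus A x y) u (last u (map fst p)).
Proof.
move=> vxy; elim: p u => [|[z t] p IH] u /=; first by rewrite connect0.
move=> /and3P[Auz _ Hw]; rewrite !in_cons !negb_or => /and3P[Hu Hz Hr].
apply: connect_trans (IH z Hw _); last by rewrite in_cons negb_or Hz.
apply: connect1; rewrite /und_minus /und Auz /=.
rewrite eq_sym in Hu; rewrite eq_sym in Hz.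
by case/orP: vxy => /eqP Hv; subst v; rewrite (negbTE Hu) (negbTE Hz) /= ?andbF.
Qed.

Lemma split_mem (V : finType) (v : V) (p : seq (V * nat)) :
  v \in map fst p -> exists p1 t p2, p = p1 ++ (v,t) :: p2.
Proof.
elim: p => [|[z t] p IH] //=; rewrite in_cons => /orP[/eqP->|/IH[p1[t'[p2 ->]]]].
- by exists [::], t, p.
- by exists ((z,t)::p1), t', p2.
Qed.

Lemma tp_through (V : finType) (A : rel V) lam x y v u w p :
  (v == x) || (v == y) -> temporal_path A lam u w p -> u != v -> w != v ->
  ~~ connect (und_minus A x y) u w ->
  temporally_connected A lam u v /\ temporally_connected A lam v w.
Proof.
move=> vxy Hp uv wv nc.
have Hm : v \in map fst p.
  move: (Hp) => /and4P[Hw _ _ /eqP Hl].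
  case: (boolP (v \in u :: map fst p)) => [|H]; last first.
    by move: (walk_avoid vxy Hw H); rewrite Hl (negbTE nc).
  by rewrite in_cons eq_sym (negbTE uv).
case: (split_mem Hm) => p1 [t [p2 E]]; subst p.
case: (tp_split Hp) => H1 H2.
split; split => //; [by left; exists (p1 ++ [:: (v,t)]) | by rewrite eq_sym | by left; exists p2].
Qed.

Lemma tc_sym (V : finType) (A : rel V) lam u v :
  temporally_connected A lam u v -> temporally_connected A lam v u.
Proof. by case=> ne [h|h]; split; rewrite 1?eq_sym //; [right|left]. Qed.

Lemma modS (k x : nat) : x < k -> x.+1 %% k = (if x.+1 == k then 0 else x.+1).
Proof. move=> h; case: eqP => [->|h2]; first by rewrite modnn. rewrite modn_small //; lia. Qed.

Lemma tri (k i a b : nat) : 4 <= k -> i < k -> a < k -> b < k ->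
  (a == (i.+1) %% k) || (i == (a.+1) %% k) ->
  (b == (i.+1) %% k) || (i == (b.+1) %% k) ->
  (b == (a.+1) %% k) || (a == (b.+1) %% k) -> False.
Proof. move=> ? hi ha hb. rewrite !modS //.
case: (i.+1 =P k) => ?; case: (a.+1 =P k) => ?; case: (b.+1 =P k) => ?;
  move=> /orP[]/eqP ? /orP[]/eqP ? /orP[]/eqP ?; lia. Qed.

Lemma und_minus_sym (V : finType) (A : rel V) x y : symmetric (und_minus A x y).
Proof.
move=> p q; rewrite /und_minus /und orbC; congr (_ && ~~ _).
by rewrite orbC (andbC (q == x)) (andbC (q == y)).
Qed.

Lemma idx (k i n : nat) : 0 < n < k -> i < k -> (i + n) %% k != i.
Proof.
move=> hn hi; case: (ltnP (i + n) k) => h.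
  rewrite modn_small //; lia.
have -> : i + n = (i + n - k) + k by lia.
rewrite modnDr modn_small; lia.
Qed.

Lemma back (k i j : nat) : i < k -> j < k -> j != i -> exists m, 0 < m < k /\ (i + m) %% k = j.
Proof.
move=> hi hj hji; case: (leqP i j) => h.
  exists (j - i); split; first by lia. rewrite subnKC // modn_small //.
exists (j + k - i); split; first by lia.
have -> : i + (j + k - i) = j + k by lia.
by rewrite modnDr modn_small.
Qed.

Theorem mainTheorem7 (V : finType) (A : rel V) (tmax : nat)
    (lam : V -> V -> seq nat) (c : seq V) :
  oriented_tree A ->
  labels_in A lam tmax ->
  induced_cycle A lam c ->
  4 <= size c ->
  forall (v : V) (x y : V),
    v \in c -> A x y -> (v == x) || (v == y) ->
    forall w1 w2 : V, w1 \in c -> w2 \in c -> w1 != v -> w2 != v ->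
      connect (und_minus A x y) w1 w2.
Proof.
move=> _ _ [Hk Hu Hcyc] Hk4 v x y vc Axy vxy w1 w2 w1c w2c w1v w2v.
set R := connect (und_minus A x y).
have Rsym : forall a b, R a b -> R b a.
  by move=> a b; rewrite /R (sym_connect_sym (@und_minus_sym _ A x y)).
set k := size c.
have key : forall p q, p != v -> q != v -> conn_edge A lam p q -> ~~ R p q ->
    conn_edge A lam v p /\ conn_edge A lam v q.
  move=> p q pv qv [_ [[P HP]|[P HP]]] nR.
  - case: (tp_through vxy HP pv qv nR) => h1 h2; split => //; exact: tc_sym.
  - have nR' : ~~ R q p by apply/negP => /Rsym; apply/negP.
    case: (tp_through vxy HP qv pv nR') => h1 h2; split => //; exact: tc_sym.
set i := index v c.
have ik : i < k by rewrite index_mem.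
have vi : nth v c i = v by rewrite nth_index.
have adj : forall a b, a < k -> b < k -> conn_edge A lam (nth v c a) (nth v c b) ->
    (b == (a.+1) %% k) || (a == (b.+1) %% k).
  by move=> a b ha hb /(Hcyc v a b ha hb).
have neq : forall a, a < k -> a != i -> nth v c a != v.
  by move=> a ha hai; rewrite -{2}vi nth_uniq.
set f := fun m => nth v c ((i + m) %% k).
have k0 : 0 < k by lia.
have walk : forall m, 1 <= m < k -> R (f 1) (f m).
  elim=> [|n IH] // /andP[_ hn].
  case: (n =P 0) => [->|n0]; first exact: connect0.
  apply: connect_trans (IH _) _; first by lia.
  have ha : (i + n) %% k < k by rewrite ltn_mod.
  have hb : (i + n.+1) %% k < k by rewrite ltn_mod.
  have ab : (i + n.+1) %% k == ((i + n) %% k).+1 %% k.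
    by rewrite addnS -addn1 -(addn1 ((i + n) %% k)) modnDml.
  case: (boolP (R (f n) (f n.+1))) => // nR; exfalso.
  have an : (i + n) %% k != i by apply: idx => //; lia.
  have bn : (i + n.+1) %% k != i by apply: idx => //; lia.
  have e1 : conn_edge A lam (f n) (f n.+1) by apply/(Hcyc v _ _ ha hb); rewrite ab.
  case: (key _ _ (neq _ ha an) (neq _ hb bn) e1 nR) => e2 e3.
  have e2' : conn_edge A lam (nth v c i) (f n) by rewrite vi.
  have e3' : conn_edge A lam (nth v c i) (f n.+1) by rewrite vi.
  exact: (tri Hk4 ik ha hb (adj _ _ ik ha e2') (adj _ _ ik hb e3') (adj _ _ ha hb e1)).
have inf : forall w, w \in c -> w != v -> R (f 1) w.
  move=> w wc wv.
  have jk : index w c < k by rewrite index_mem.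
  have ji : index w c != i by apply: contra wv => /eqP e; rewrite -(nth_index v wc) e vi.
  case: (back ik jk ji) => m [hm e].
  by have := walk m hm; rewrite /f e nth_index.
apply: connect_trans (Rsym _ _ (inf _ w1c w1v)) (inf _ w2c w2v).
Qed.
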